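(* Let $A=(a_{ij})\in\overline{\mathbb{R}}^{n\times n}$. Then $A$ is pseudo-diagonalizable if and only if $A$ is finite and for all $i,j,k\in[n]$ with $k\neq i$ and $k\neq j$, $$a_{ik}+a_{kj}=\begin{cases} a_{ij} & \text{if } i\neq j,\\ 0 & \text{if } i=j.\end{cases}$$
   Context: Max-plus semiring: $\overline{\mathbb{R}}=\mathbb{R}\cup\{-\infty\}$ with $a\oplus b=\max\{a,b\}$, $a\otimes b=a+b$, $\varepsilon=-\infty$. Matrix operations: $(A\oplus B)_{ij}=\max(A_{ij},B_{ij})$, $(A\otimes B)_{ij}=\max_k(A_{ik}+B_{kj})$. $[n]=\{1,\dots,n\}$. A matrix is finite if all its entries are real. $I$ denotes the $n\times n$ matrix with $0$ on the diagonal and $\varepsilon$ elsewhere; $P\in\overline{\mathbb{R}}^{n\times n}$ is invertible if there is $Q$ with $P\otimes Q=Q\otimes P=I$ (equivalently, $P$ is a generalized permutation matrix: exactly one real entry in each row and each column, all other entries $\varepsilon$). Matrices $A,B\in\overline{\mathbb{R}}^{n\times n}$ are similar if $B=P^{-1}\otimes A\otimes P$ for some invertible $P$. A square matrix is pseudo-diagonal if its diagonal entries are real numbers and all its off-diagonal entries equal the real number $0$; $\mathrm{pdiag}(d_1,\dots,d_n)$ denotes the pseudo-diagonal matrix with diagonal entries $d_1,\dots,d_n$. A square matrix is pseudo-diagonalizable if it is similar to a pseudo-diagonal matrix. *)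

(* Defs.v *)
(* Max-plus semiring over R : realType, with
   -oo represented by None and a real number r by Some r. *)
From HB Require Import structures.
From mathcomp Require Import all_boot all_order all_algebra.
From mathcomp Require Import reals.
Set Implicit Arguments. Unset Strict Implicit. Unset Printing Implicit Defensive.
Import Order.TTheory GRing.Theory Num.Theory.
Local Open Scope ring_scope.

Section MaxPlus.
Variable R : realType.

Definition mpR := option R.

Definition mp_add (a b : mpR) : mpR :=
  match a, b with
  | None, _ => b
  | _, None => a
  | Some x, Some y => Some (Num.max x y)
  end.

Definition mp_mul (a b : mpR) : mpR :=
  match a, b with
  | Some x, Some y => Some (x + y)
  | _, _ => None
  end.

Definition mp_mulmx (n : nat) (A B : 'M[mpR]_n) : 'M[mpR]_n :=
  \matrix_(i, j) \big[mp_add/None]_(k < n) mp_mul (A i k) (B k j).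

Definition mp_id (n : nat) : 'M[mpR]_n :=
  \matrix_(i, j) if i == j then Some 0 else None.

Definition mp_inverse (n : nat) (P Q : 'M[mpR]_n) : Prop :=
  mp_mulmx P Q = mp_id n /\ mp_mulmx Q P = mp_id n.

Definition mp_similar (n : nat) (A B : 'M[mpR]_n) : Prop :=
  exists P Q : 'M[mpR]_n, mp_inverse P Q /\ B = mp_mulmx (mp_mulmx Q A) P.

Definition mp_finite (n : nat) (A : 'M[mpR]_n) : Prop :=
  forall i j, A i j <> None.

Definition pseudo_diagonal (n : nat) (A : 'M[mpR]_n) : Prop :=
  (forall i, A i i <> None) /\ (forall i j, i != j -> A i j = Some 0).

Definition pseudo_diagonalizable (n : nat) (A : 'M[mpR]_n) : Prop :=
  exists B : 'M[mpR]_n, pseudo_diagonal B /\ mp_similar A B.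

End MaxPlus.

(* Main.v *)
Require Import Defs.
From HB Require Import structures.
From mathcomp Require Import all_boot all_order all_algebra.
From mathcomp Require Import reals.
From mathcomp Require Import lra.
Import Order.TTheory GRing.Theory Num.Theory.
Local Open Scope ring_scope.
Set Implicit Arguments. Unset Strict Implicit.

Section Aux.
Variable R : realType.
Implicit Types a b c : mpR R.

Lemma mp_addA : associative (@mp_add R).
Proof. by case=> [x|] [y|] [z|] //=; rewrite maxA. Qed.
Lemma mp_addC : commutative (@mp_add R).
Proof. by case=> [x|] [y|] //=; rewrite maxC. Qed.
Lemma mp_add0l : left_id None (@mp_add R).
Proof. by case. Qed.

HB.instance Definition _ := Monoid.isComLaw.Build (mpR R) None (@mp_add R) mp_addA mp_addC mp_add0l.

Lemma mp_add_None a b : mp_add a b = None -> a = None /\ b = None.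
Proof. by case: a b => [x|] [y|]. Qed.

Lemma mp_mul_None a b : mp_mul a b = None -> a = None \/ b = None.
Proof. case: a b => [x|] [y|] //=; by [left|right]. Qed.

Lemma mp_mulr0 a : mp_mul a None = None.
Proof. by case: a. Qed.

Variable n : nat.
Implicit Types F : 'I_n -> mpR R.

Lemma big_None F : \big[@mp_add R/None]_(k < n) F k = None -> forall k, F k = None.
Proof. by move=> H k; move: H; rewrite (bigD1 k) //= => /mp_add_None []. Qed.

Lemma big_single F k0 : (forall k, k != k0 -> F k = None) ->
  \big[@mp_add R/None]_(k < n) F k = F k0.
Proof.
move=> H; rewrite (bigD1 k0) //= big1; first by case: (F k0).
by move=> k /H.
Qed.

Lemma big_notNone F : \big[@mp_add R/None]_(k < n) F k <> None -> exists k, F k <> None.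
Proof.
move=> H; case: (pickP (fun k => F k != None)) => [k /eqP Hk|H0]; first by exists k.
by exfalso; apply: H; apply: big1 => k _; apply/eqP; move: (H0 k) => /negbFE.
Qed.

Lemma mulmx_row_single (X Y : 'M[mpR R]_n) i j (c : 'I_n) :
  (forall k, k != c -> X i k = None) -> mp_mulmx X Y i j = mp_mul (X i c) (Y c j).
Proof. by move=> H; rewrite mxE (big_single (k0:=c)) // => k /H ->. Qed.

Lemma mulmx_col_single (X Y : 'M[mpR R]_n) i j (r : 'I_n) :
  (forall k, k != r -> Y k j = None) -> mp_mulmx X Y i j = mp_mul (X i r) (Y r j).
Proof. by move=> H; rewrite mxE (big_single (k0:=r)) // => k /H ->; rewrite mp_mulr0. Qed.


Lemma PQ_entry (P Q : 'M[mpR R]_n) i j : mp_mulmx P Q = @mp_id R n ->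
  \big[@mp_add R/None]_(k < n) mp_mul (P i k) (Q k j) = if i == j then Some 0 else None.
Proof. by move=> H; have := congr1 (fun M : 'M__ => M i j) H; rewrite !mxE. Qed.

Lemma stepA (P Q : 'M[mpR R]_n) i : mp_mulmx P Q = @mp_id R n ->
  exists k, P i k <> None /\ Q k i <> None.
Proof.
move=> /(PQ_entry i i); rewrite eqxx => E.
have [|k Hk] := big_notNone (F := fun k => mp_mul (P i k) (Q k i)); first by rewrite E.
exists k; by case: (P i k) (Q k i) Hk => [x|] [y|].
Qed.

Lemma stepB (P Q : 'M[mpR R]_n) i k j : mp_mulmx P Q = @mp_id R n ->
  P i k <> None -> j != i -> Q k j = None.
Proof.
move=> /(PQ_entry i j) E Hp Hji; move: E; rewrite eq_sym (negbTE Hji).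
by move=> /big_None /(_ k) /mp_mul_None [].
Qed.

Lemma rowP1 (P Q : 'M[mpR R]_n) i : mp_mulmx P Q = @mp_id R n -> mp_mulmx Q P = @mp_id R n ->
  exists k, P i k <> None /\ forall j, j != k -> P i j = None.
Proof.
move=> H1 H2; have [k [Hp Hq]] := stepA i H1.
by exists k; split => // j Hj; apply: (stepB H2 Hq Hj).
Qed.

Lemma colP1 (P Q : 'M[mpR R]_n) v j : mp_mulmx P Q = @mp_id R n -> mp_mulmx Q P = @mp_id R n ->
  P v j <> None -> forall m, m != v -> P m j = None.
Proof.
move=> H1 H2 Hv.
have [l [Hq Hp]] := stepA j H2.
have Hu : forall m, P m j <> None -> m = l.
  move=> m Hm; case: (eqVneq m l) => // Hml; exfalso.
  by apply: Hq; apply: (stepB H1 Hm); rewrite eq_sym Hml.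
move=> m Hm; case E: (P m j) => [x|] //; exfalso.
have e1 := Hu m; have e2 := Hu v Hv.
by move/eqP: Hm; apply; rewrite e1 ?E // e2.
Qed.

Lemma Bentry (P Q A : 'M[mpR R]_n) u v i j :
  mp_mulmx P Q = @mp_id R n -> mp_mulmx Q P = @mp_id R n ->
  P u i <> None -> P v j <> None ->
  mp_mulmx (mp_mulmx Q A) P i j = mp_mul (mp_mul (Q i u) (A u v)) (P v j)
  /\ mp_mul (Q i u) (P u i) = Some 0.
Proof.
move=> H1 H2 Hu Hv.
have [c [Hc Hc']] := rowP1 i H2 H1.
have E0 := PQ_entry i i H2; rewrite eqxx in E0.
rewrite (big_single (k0:=c)) in E0; last by move=> k /Hc' ->.
have Pci : P c i <> None by move: E0; case: (P c i); case: (Q i c).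
have cu : c = u.
  case: (eqVneq c u) => // Hcu; exfalso.
  by apply: Pci; apply: (colP1 H1 H2 Hu); exact: Hcu.
subst c; split => //.
rewrite (mulmx_col_single _ _ _ (r:=v)); last by apply: colP1 H1 H2 Hv.
by rewrite (mulmx_row_single _ _ _ (c:=u)).
Qed.


Lemma keyA (P Q A B : 'M[mpR R]_n) u v i j pu pv :
  mp_mulmx P Q = @mp_id R n -> mp_mulmx Q P = @mp_id R n ->
  pseudo_diagonal B -> B = mp_mulmx (mp_mulmx Q A) P ->
  P u i = Some pu -> P v j = Some pv ->
  exists a : R, A u v = Some a /\ (u != v -> a = pu - pv).
Proof.
move=> H1 H2 [Bd Bo] EB Hu Hv.
have nu : P u i <> None by rewrite Hu.
have nv : P v j <> None by rewrite Hv.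
have [E1 E2] := Bentry A H1 H2 nu nv.
rewrite -EB Hu Hv in E1 E2.
case Eq: (Q i u) E1 E2 => [q|]; last by [].
move=> E1 [E2].
have HB : B i j <> None.
  case: (eqVneq i j) => [<-|/Bo ->] //; exact: Bd.
case Ea: (A u v) E1 => [a|] E1; last by rewrite E1 in HB.
 exists a; split => // Huv.
have Hij : i != j.
  apply/negP => /eqP Eij; subst j.
  by have := colP1 H1 H2 nu (m:=v); rewrite eq_sym Huv Hv => /(_ isT).
rewrite Bo // in E1; case: E1 => E1.
lra.
Qed.

Lemma forward (A : 'M[mpR R]_n) : pseudo_diagonalizable A ->
  (mp_finite A /\
   forall i j k : 'I_n, k != i -> k != j ->
     mp_mul (A i k) (A k j) = (if i != j then A i j else Some 0)).
Proof.
move=> [B [HB [P [Q [[H1 H2] EB]]]]].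
have col : forall u, exists i pu, P u i = Some pu.
  move=> u; have [i [Hi _]] := rowP1 u H1 H2.
  by case E: (P u i) Hi => [pu|] // _; exists i, pu.
split.
  move=> u v; have [i [pu Hu]] := col u; have [j [pv Hv]] := col v.
  by have [a [-> _]] := keyA H1 H2 HB EB Hu Hv.
move=> i j k Hki Hkj.
have [ci [pi Hi]] := col i; have [ck [pk Hk]] := col k.
have [a1 [-> E1]] := keyA H1 H2 HB EB Hi Hk.
have e1 : a1 = pi - pk by apply: E1; rewrite eq_sym.
case: (eqVneq i j) => [Eij|Hij] /=.
  subst j.
  have [a2 [-> E2]] := keyA H1 H2 HB EB Hk Hi.
  by rewrite (E2 Hkj) e1; congr Some; lra.
have [cj [pj Hj]] := col j.
have [a2 [-> E2]] := keyA H1 H2 HB EB Hk Hj.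
have [a3 [-> E3]] := keyA H1 H2 HB EB Hi Hj.
by rewrite (E2 Hkj) (E3 Hij) e1; congr Some; lra.
Qed.

Lemma backward_c (A : 'M[mpR R]_n) (c : 'I_n -> R) :
  mp_finite A -> (forall i j, i != j -> A i j = Some (c i - c j)) ->
  pseudo_diagonalizable A.
Proof.
move=> Hf Hc.
pose P : 'M[mpR R]_n := \matrix_(i, j) if i == j then Some (c i) else None.
pose Q : 'M[mpR R]_n := \matrix_(i, j) if i == j then Some (- c i) else None.
have Pr : forall i k, k != i -> P i k = None by move=> i k Hk; rewrite mxE eq_sym (negbTE Hk).
have Qr : forall i k, k != i -> Q i k = None by move=> i k Hk; rewrite mxE eq_sym (negbTE Hk).
have Pc : forall j k, k != j -> P k j = None by move=> j k Hk; rewrite mxE (negbTE Hk).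
exists (mp_mulmx (mp_mulmx Q A) P); split; last first.
  exists P, Q; split => //; split; apply/matrixP => i j.
    rewrite (mulmx_row_single _ _ _ (c:=i)); last by apply: Pr.
    rewrite !mxE eqxx; case: (eqVneq i j) => [Eij|_] /=; last by [].
    by subst j; rewrite addrN.
  rewrite (mulmx_row_single _ _ _ (c:=i)); last by apply: Qr.
  rewrite !mxE eqxx; case: (eqVneq i j) => [Eij|_] /=; last by [].
  by subst j; rewrite addNr.
have BE : forall i j, mp_mulmx (mp_mulmx Q A) P i j = mp_mul (mp_mul (Some (- c i)) (A i j)) (Some (c j)).
  move=> i j; rewrite (mulmx_col_single _ _ _ (r:=j)); last by apply: Pc.
  rewrite (mulmx_row_single _ _ _ (c:=i)); last by apply: Qr.
  by rewrite !mxE !eqxx.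
split.
  move=> i; rewrite BE; case E: (A i i) => [x|] //; by move: (Hf i i); rewrite E.
move=> i j Hij; rewrite BE Hc //=; congr Some; lra.
Qed.

End Aux.

Theorem theorem3p3 (R : realType) (n : nat) (A : 'M[mpR R]_n) :
  pseudo_diagonalizable A <->
  (mp_finite A /\
   forall i j k : 'I_n, k != i -> k != j ->
     mp_mul (A i k) (A k j) = (if i != j then A i j else Some 0)).
Proof.
split; first exact: forward.
move=> [Hf Hcond].
case: n A Hf Hcond => [|m] A Hf Hcond.
  apply: (@backward_c _ _ A (fun _ => 0)) => // i; by case: i.
pose a i j := odflt 0 (A i j).
have hA : forall i j, A i j = Some (a i j).
  by move=> i j; rewrite /a; case E: (A i j) (Hf i j).
pose c (u : 'I_m.+1) := if u == ord0 then 0 else a u ord0.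
apply: (@backward_c _ _ A c) => // i j Hij.
rewrite hA; congr Some; rewrite /c.
have anti : forall k, k != ord0 -> a ord0 k + a k ord0 = 0.
  move=> k Hk; have := Hcond ord0 ord0 k Hk Hk; rewrite eqxx !hA /=; by case.
case: (eqVneq i ord0) => [Ei|Hi]; case: (eqVneq j ord0) => [Ej|Hj].
- by move: Hij; rewrite Ei Ej eqxx.
- subst i; rewrite ?eqxx ?(negbTE Hj) /=; have := anti j Hj; lra.
- subst j; rewrite ?eqxx ?(negbTE Hi) /=; lra.
- rewrite ?(negbTE Hi) ?(negbTE Hj) /=.
  have Hi' : ord0 != i by rewrite eq_sym.
  have Hj' : ord0 != j by rewrite eq_sym.
  have := Hcond i j ord0 Hi' Hj'; rewrite Hij !hA /= => -[E].
  have := anti j Hj; lra.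
Qed.
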